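(* Let $0.1<\gamma\le 1$, let $r=k$ be an integer with $3\le k<0.01\log^{1/2}n$, and let $n$ be sufficiently large. Then every set of $\gamma n^k$ vertices of $\mathcal{H}(n,k,k)$ spans at least $$\frac{\gamma^{k+1}\,n^{2k}}{k!\cdot 2^{3k^2}\cdot 10\cdot 2^{3k}\cdot k\cdot\log n}$$ hyperedges.
   Context: Logarithms are to base 2. For integers $n,k,r\ge3$, $\mathcal{H}(n,k,r)$ is the $r$-uniform hypergraph with vertex set $[n]^k$ whose edges are all $r$-element subsets of $[n]^k$ lying on a common line in $\mathbb{R}^k$. A vertex set spans an edge if the edge is contained in it. *)

(* Defs.v *)
From HB Require Import structures.
From mathcomp Require Import all_boot.
From Stdlib Require Import Reals ClassicalEpsilon.

Set Implicit Arguments.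
Unset Strict Implicit.
Unset Printing Implicit Defensive.

(* Vertex set [n]^k : a point x has coordinates (x i).+1 in {1,...,n}. *)
Definition vert (n k : nat) := {ffun 'I_k -> 'I_n}.

Definition coordR (n k : nat) (x : vert n k) (i : 'I_k) : R := INR (x i).+1.

Definition on_common_line (n k : nat) (A : {set vert n k}) : Prop :=
  exists (p d : 'I_k -> R), forall x, x \in A ->
    exists t : R, forall i : 'I_k, coordR x i = (p i + t * d i)%R.

(* Boolean version (via classical choice) so edges can be counted. *)
Definition on_common_lineb (n k : nat) (A : {set vert n k}) : bool :=
  if excluded_middle_informative (on_common_line A) then true else false.

Definition is_edge (n k r : nat) (e : {set vert n k}) : bool :=
  (#|e| == r) && on_common_lineb e.

Definition spanned_edges (n k r : nat) (S : {set vert n k}) : {set {set vert n k}} :=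
  [set e : {set vert n k} | (e \subset S) && is_edge r e].

Definition log2 (x : R) : R := (ln x / ln 2)%R.

(* Main.v *)
Require Import Defs.
From HB Require Import structures.
From mathcomp Require Import all_boot.
From Stdlib Require Import Reals.
From mathcomp Require Import zify.
From Stdlib Require Import ClassicalEpsilon Lra Lia.
From Stdlib Require Import Arith ArithRing.
Local Notation "a ^ b" := (expn a b) : nat_scope.

Lemma expn_mono (a b p : nat) : a <= b -> a ^ p <= b ^ p.
Proof. move=> ab; elim: p => [|p IH]; rewrite ?expn0 // !expnS leq_mul //. Qed.

Lemma cheb_pt (a b p : nat) : a ^ p * b + b ^ p * a <= a ^ p.+1 + b ^ p.+1.
Proof.
wlog ab : a b / a <= b.
  move=> H; case: (leqP a b) => h; first exact: H.
  by rewrite addnC [X in _ <= X]addnC; apply: H; apply: ltnW.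
have [t ->] : exists t, b = a + t by exists (b - a); rewrite subnKC.
have h1 : a ^ p <= (a + t) ^ p by apply: expn_mono; rewrite leq_addr.
rewrite !expnS.
set X := a ^ p; set Y := (a + t) ^ p.
have : X * t <= Y * t by rewrite leq_mul2r h1 orbT.
nia.
Qed.
Lemma cheb_sum (I : finType) (A : pred I) (y : I -> nat) (p : nat) :
  (\sum_(i in A) y i ^ p) * (\sum_(i in A) y i) <= #|A| * \sum_(i in A) y i ^ p.+1.
Proof.
set L := _ * _.
have e1 : L = \sum_(i in A) \sum_(j in A) y i ^ p * y j by rewrite /L big_distrlr.
have e2 : L = \sum_(i in A) \sum_(j in A) y j ^ p * y i.
  by rewrite e1 exchange_big.
have e3 : #|A| * \sum_(i in A) y i ^ p.+1 = \sum_(i in A) \sum_(j in A) y i ^ p.+1.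
  by rewrite big_distrr /=; apply: eq_bigr => i _; rewrite sum_nat_const mulnC.
have e4 : #|A| * \sum_(i in A) y i ^ p.+1 = \sum_(i in A) \sum_(j in A) y j ^ p.+1.
  by rewrite -sum_nat_const.
suff : L + L <= #|A| * \sum_(i in A) y i ^ p.+1 + #|A| * \sum_(i in A) y i ^ p.+1 by lia.
rewrite [X in X + _ <= _]e1 e2 [X in _ <= X + _]e3 e4 -!big_split /=.
apply: leq_sum => i _; rewrite -!big_split /=; apply: leq_sum => j _.
exact: cheb_pt.
Qed.

Lemma power_mean (I : finType) (A : pred I) (y : I -> nat) (p : nat) :
  (\sum_(i in A) y i) ^ p.+1 <= #|A| ^ p * \sum_(i in A) y i ^ p.+1.
Proof.
elim: p => [|p IH]; first by rewrite expn0 mul1n; apply: leq_sum => i _; rewrite expn1.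
rewrite expnS mulnC.
apply: (leq_trans (leq_mul IH (leqnn _))).
rewrite -mulnA expnS (mulnC #|A|) -mulnA leq_mul2l cheb_sum orbT //.
Qed.
Lemma ffact_low (m s : nat) : (s - m) ^ m <= s ^_ m.
Proof.
elim: m s => [|m IH] s; first by rewrite expn0 ffactn0.
rewrite ffactnS expnS; apply: leq_mul; first exact: leq_subr.
apply: leq_trans (IH s.-1); apply: expn_mono; lia.
Qed.

Lemma bin_low (s k : nat) : (s - k) ^ k <= k`! * 'C(s, k).
Proof. by rewrite mulnC bin_ffact; exact: ffact_low. Qed.

Lemma card_coord (n k M : nat) (i : 'I_k) :
  #|[set x : vert n k | (x i : nat) < M]| <= M * n ^ k.-1.
Proof.
pose F := fun j : 'I_k => if j == i then [pred y : 'I_n | (y : nat) < M] else predT.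
have -> : #|[set x : vert n k | (x i : nat) < M]| = #|finfun.family F|.
  apply: eq_card => x; rewrite inE; apply/idP/familyP.
    by move=> h j; rewrite /F; case: eqP => [->|] //.
  by move/(_ i); rewrite /F eqxx.
rewrite card_family foldrE big_map big_enum /= (bigD1 i) //= /F eqxx.
apply: leq_mul.
  rewrite cardE -(size_map val) -[X in _ <= X](size_iota 0 M).
  apply: uniq_leq_size; first by rewrite map_inj_uniq ?enum_uniq //; exact: val_inj.
  move=> y /mapP [z]; rewrite mem_enum inE => hz ->; rewrite mem_iota /=; lia.
have -> : \prod_(j | j != i) #|(if j == i then [pred y : 'I_n | (y : nat) < M] else predT)| = \prod_(j | j != i) n.
  by apply: eq_bigr => j /negbTE ->; rewrite card_ord.
rewrite prod_nat_const cardC1 card_ord //.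
Qed.

Lemma card_Bset (n k M : nat) :
  #|[set x : vert n k | [exists i, (x i : nat) < M]]| <= k * (M * n ^ k.-1).
Proof.
have sub : [set x : vert n k | [exists i, (x i : nat) < M]] \subset
    \bigcup_(i : 'I_k) [set x : vert n k | (x i : nat) < M].
  apply/subsetP => x; rewrite inE => /existsP [i hi].
  by apply/bigcupP; exists i => //; rewrite inE.
apply: leq_trans (subset_leq_card sub) _.
have -> : k * (M * n ^ k.-1) = \sum_(i : 'I_k) (M * n ^ k.-1)
  by rewrite sum_nat_const card_ord.
apply: (big_ind2 (fun (A : {set vert n k}) m => #|A| <= m)).
- by rewrite cards0.
- move=> A a C c hA hC; apply: leq_trans (leq_card_setU A C) _; exact: leq_add.
- move=> i _; exact: card_coord.
Qed.
Section Geo.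
Variables (n k B : nat).

Definition dir (f : {ffun 'I_k -> 'I_B}) (i : 'I_k) : nat := f i + B.

Definition tmax (f : {ffun 'I_k -> 'I_B}) (x : vert n k) : nat :=
  \max_(s < n | [forall i, s * dir f i <= x i]) s.

Lemma tmax_le f (x : vert n k) i : tmax f x * dir f i <= x i.
Proof.
rewrite /tmax; move: i.
apply: (big_ind (fun m => forall i, m * dir f i <= x i)).
- by move=> i; rewrite mul0n.
- move=> a b Ha Hb i; case: (leqP a b) => h.
  + by move: (Ha i) (Hb i); rewrite /maxn; case: ltnP.
  + by move: (Ha i) (Hb i); rewrite /maxn; case: ltnP.
- by move=> s /forallP H i; apply: H.
Qed.

Lemma repP f (x : vert n k) i : x i - tmax f x * dir f i < n.
Proof. exact: leq_ltn_trans (leq_subr _ _) (ltn_ord (x i)). Qed.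

Definition rep f x : vert n k := [ffun i => Ordinal (repP f x i)].

Lemma rep_spec f (x : vert n k) i : (rep f x i : nat) + tmax f x * dir f i = x i.
Proof. by rewrite ffunE /= subnK // tmax_le. Qed.

Lemma rep_small (i0 : 'I_k) f (x : vert n k) : 0 < B -> [exists i, (rep f x i : nat) < 2 * B].
Proof.
move=> B0.
case: (boolP [exists i, (rep f x i : nat) < dir f i]).
  case/existsP=> i Hi; apply/existsP; exists i.
  apply: leq_trans Hi _; rewrite /dir; have := ltn_ord (f i); lia.
move/existsPn=> H; exfalso.
have H2 : forall i, (tmax f x).+1 * dir f i <= x i.
  move=> i; have := H i; rewrite -leqNgt => h.
  rewrite -(rep_spec f x i) mulSn; lia.
have lt : (tmax f x).+1 < n.
  apply: leq_ltn_trans (ltn_ord (x i0)).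
  apply: leq_trans (H2 i0); rewrite /dir; apply: leq_pmulr; lia.
have := @leq_bigmax_cond _ (fun s : 'I_n => [forall i, s * dir f i <= x i]) (fun s => s) (Ordinal lt).
rewrite -/(tmax f x) /=.
have -> : [forall i, (tmax f x).+1 * dir f i <= x i] by apply/forallP.
by move/(_ isT); rewrite ltnn.
Qed.


Definition fib (S : {set vert n k}) f (c : vert n k) := [set x in S | rep f x == c].

Lemma fib_facts S f c (x0 y0 : vert n k) (j : 'I_k) :
  0 < B -> x0 \in fib S f c -> y0 \in fib S f c -> (x0 j : nat) < y0 j ->
  let u := tmax f y0 - tmax f x0 in
  [/\ 0 < u, u <= n %/ B, (forall i, (y0 i : nat) = x0 i + u * dir f i) & c = rep f x0].
Proof.
move=> B0; rewrite !inE => /andP [_ /eqP hx] /andP [_ /eqP hy] hj u.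
have ex : forall i, (x0 i : nat) = c i + tmax f x0 * dir f i by move=> i; rewrite -hx rep_spec.
have ey : forall i, (y0 i : nat) = c i + tmax f y0 * dir f i by move=> i; rewrite -hy rep_spec.
have txy : tmax f x0 < tmax f y0.
  rewrite ltnNge; apply/negP => h; move: hj; rewrite ex ey ltnNge leq_add2l.
  by rewrite leq_mul2r h orbT.
have ey2 : forall i, (y0 i : nat) = x0 i + u * dir f i.
  by move=> i; rewrite ey ex /u -addnA -mulnDl subnKC // ltnW.
split => //; first by rewrite /u subn_gt0.
rewrite leq_divRL //; apply: leq_trans (ltnW (ltn_ord (y0 j))).
rewrite ey2; apply: leq_trans (leq_addl _ _); rewrite leq_mul2l /dir leq_addl orbT //.
Qed.

Lemma mult_bound S (e : {set vert n k}) : 0 < B -> 1 < #|e| ->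
  #|[set p : {ffun 'I_k -> 'I_B} * vert n k | e \subset fib S p.1 p.2]| <= (n %/ B).+1.
Proof.
move=> B0 /card_gt1P [a [b [ha hb hab]]].
have [j hj] : exists j, a j != b j.
  apply/existsP; apply: contraR hab => /existsPn H; apply/eqP/ffunP => i.
  by have := H i; rewrite negbK => /eqP.
wlog lt : a b ha hb hab hj / (a j : nat) < b j.
  move=> W; case: (ltngtP (a j) (b j)) => h.
  - exact: W h.
  - by apply: (W b a) => //; rewrite eq_sym.
  - by move: hj; rewrite (val_inj h) eqxx.
pose g (p : {ffun 'I_k -> 'I_B} * vert n k) : 'I_(n %/ B).+1 :=
  inord (tmax p.1 b - tmax p.1 a).
rewrite -(card_in_imset (f := g)); first by apply: leq_trans (max_card _) _; rewrite card_ord.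
move=> [f c] [f' c']; rewrite !inE /= => /subsetP h1 /subsetP h2.
have [u0 uB ey ec] := @fib_facts S f c a b j B0 (h1 _ ha) (h1 _ hb) lt.
have [u0' uB' ey' ec'] := @fib_facts S f' c' a b j B0 (h2 _ ha) (h2 _ hb) lt.
rewrite /g /= => /(congr1 (@nat_of_ord _)); rewrite !inordK ?ltnS // => hu.
have ef : f = f'.
  apply/ffunP => i; apply: val_inj.
  have := ey i; rewrite ey' hu => /eqP; rewrite eqn_add2l eqn_mul2l => /orP [].
    by move/eqP => u00; move: u0'; rewrite u00.
  by rewrite /dir eqn_add2r => /eqP.
by rewrite ec ec' ef.
Qed.


Lemma fib_spanned S f c (e : {set vert n k}) :
  e \subset fib S f c -> #|e| == k -> e \in spanned_edges k S.
Proof.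
move=> /subsetP he hk; rewrite inE; apply/andP; split.
  by apply/subsetP => x /he; rewrite inE => /andP [].
rewrite /is_edge hk /= /on_common_lineb.
case: excluded_middle_informative => // [[]].
exists (fun i => INR (c i).+1), (fun i => INR (dir f i)).
move=> x /he; rewrite inE => /andP [_ /eqP hx].
exists (INR (tmax f x)) => i.
rewrite /coordR -(rep_spec f x i) hx.
rewrite -addSn -plusE -multE plus_INR mult_INR //.
Qed.


Lemma card_ifsum (T : finType) (P : {pred T}) : #|P| = \sum_(x : T) (if x \in P then 1 else 0).
Proof. by rewrite -sum1_card big_mkcond. Qed.

Lemma count_upper S : 0 < B -> 1 < k ->
  \sum_(f : {ffun 'I_k -> 'I_B}) \sum_(c : vert n k) 'C(#|fib S f c|, k)
    <= (n %/ B).+1 * #|spanned_edges k S|.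
Proof.
move=> B0 k1.
have E1 : forall f c, 'C(#|fib S f c|, k) = \sum_(e : {set vert n k})
     (if (e \subset fib S f c) && (#|e| == k) then 1 else 0).
  move=> f c; rewrite -cards_draws card_ifsum; apply: eq_bigr => e _; by rewrite inE.
under eq_bigr do under eq_bigr do rewrite E1.
under eq_bigr do rewrite exchange_big.
rewrite exchange_big /= card_ifsum big_distrr /=.
apply: leq_sum => e _.
case hk: (#|e| == k); last first.
  by rewrite big1 // => f _; rewrite big1 // => c _; rewrite andbF.
under eq_bigr do under eq_bigr do rewrite andbT.
rewrite pair_big /= -card_ifsum.
case hs: (e \in spanned_edges k S).
  rewrite muln1; apply: leq_trans _ (@mult_bound S e B0 _); last by rewrite (eqP hk).
  by apply: eq_leq; apply: eq_card => p; rewrite inE.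
rewrite muln0 leqn0; apply/eqP; apply: eq_card0 => p; rewrite !inE /=.
apply/negP => h; have h2 : e \subset fib S p.1 p.2 by exact: h.
move: hs; by rewrite (@fib_spanned S p.1 p.2 e h2 hk : e \in spanned_edges k S).
Qed.


Lemma count_lower (S : {set vert n k}) (f : {ffun 'I_k -> 'I_B}) (i0 : 'I_k) : 0 < B ->
  (#|S| - k * (k * (2 * B * n ^ k.-1))) ^ k <= k`! * (k * (2 * B * n ^ k.-1)) ^ k.-1 * \sum_(c : vert n k) 'C(#|fib S f c|, k).
Proof.
move=> B0.
set L := k * (2 * B * n ^ k.-1).
set Bs := [set x : vert n k | [exists i, (x i : nat) < 2 * B]].
have kpos : 0 < k by case: (k) i0 => [[]|] .
have cB : #|Bs| <= L := card_Bset n k (2 * B).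
have e1 : #|S| = \sum_(c in Bs) #|fib S f c|.
  rewrite -sum1_card (partition_big (rep f) (mem Bs)).
    by apply: eq_bigr => c _; rewrite -sum1_card; apply: eq_bigl => x; rewrite !inE.
  by move=> x _; rewrite /Bs !inE; exact: (rep_small i0 f x B0).
have e2 : #|S| <= \sum_(c in Bs) (#|fib S f c| - k) + k * #|Bs|.
  rewrite e1 mulnC -sum_nat_const -big_split /=; apply: leq_sum => c _.
  lia.
have e3 : #|S| - k * L <= \sum_(c in Bs) (#|fib S f c| - k).
  rewrite leq_subLR; apply: leq_trans e2 _; rewrite addnC leq_add2r leq_mul2l cB orbT //.
apply: leq_trans (expn_mono _ _ k e3) _.
have pm := @power_mean _ (mem Bs) (fun c => #|fib S f c| - k) k.-1.
rewrite (prednK kpos) in pm; apply: leq_trans pm _.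
have h1 : \sum_(c in mem Bs) (#|fib S f c| - k) ^ k <= k`! * \sum_c 'C(#|fib S f c|, k).
  rewrite big_distrr /= [X in _ <= X](bigID (mem Bs)) /=; apply: leq_trans (leq_addr _ _).
  by apply: leq_sum => c _; apply: bin_low.
have h2 : #|mem Bs| ^ k.-1 <= L ^ k.-1 by apply: expn_mono.
apply: leq_trans (leq_mul h2 h1) _; by rewrite mulnCA mulnA.
Qed.

End Geo.

Lemma main_nat n k B (S : {set vert n k}) (i0 : 'I_k) : 0 < B -> 1 < k ->
  B ^ k * (#|S| - k * (k * (2 * B * n ^ k.-1))) ^ k <=
  k`! * (k * (2 * B * n ^ k.-1)) ^ k.-1 * ((n %/ B).+1 * #|spanned_edges k S|).
Proof.
move=> B0 k1.
have -> : B ^ k = #|{ffun 'I_k -> 'I_B}| by rewrite card_ffun !card_ord.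
rewrite -sum_nat_const.
apply: leq_trans _ (leq_mul (leqnn _) (@count_upper n k B S B0 k1)).
rewrite big_distrr /=; apply: leq_sum => f _.
exact: count_lower.
Qed.

Lemma rearr (k Y F Z W E : nat) :
  80 * (k * k) * (Y * (F * (Z * W) * (80 * (k * k) * E))) =
  (80 * 80) * (k * k * (k * k)) * Y * Z * F * W * E.
Proof. rewrite -?multE -?plusE; ring. Qed.

Lemma final_nat n k (S : {set vert n k}) : 3 <= k -> 80 * (k * k) < n -> n ^ k <= 10 * #|S| ->
  n * #|S| ^ k <= (80 * 80) * (k * k * (k * k)) * 2 ^ k * (2 * k) ^ k.-1 * k`! *
     n ^ (k.-1 * k.-1) * #|spanned_edges k S|.
Proof.
move=> k3 hn hS.
have k0 : 0 < k by lia.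
have k1 : 1 < k by lia.
pose i0 : 'I_k := Ordinal k0.
set E := #|spanned_edges k S|.
set kk := k * k.
have d0 : 0 < 40 * kk by rewrite /kk; nia.
set B := n %/ (40 * kk).
have hB1 : B * (40 * kk) <= n by apply: leq_trunc_div.
have hB2 : n < B.+1 * (40 * kk) by apply: ltn_ceil.
have B0 : 0 < B by nia.
have hn2 : n <= 80 * kk * B by nia.
have hT : (n %/ B).+1 <= 80 * kk.
  by rewrite ltn_divLR //; nia.
set Q := n ^ k.-1.
have nQ : n ^ k = n * Q by rewrite /Q -expnS prednK.
set X := #|S| - k * (k * (2 * B * Q)).
have hX : #|S| <= 2 * X.
  have : 4 * kk * B * Q * 10 <= 10 * #|S| by apply: leq_trans hS; rewrite nQ; nia.
  rewrite /X /kk; nia.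
have H := @main_nat n k B S i0 B0 k1; rewrite -/Q -/X -/E in H.
have eL : (k * (2 * B * Q)) ^ k.-1 = (2 * k) ^ k.-1 * B ^ k.-1 * Q ^ k.-1.
  by rewrite -!expnMn; congr (_ ^ _); nia.
rewrite eL in H.
have H1 : B ^ k * #|S| ^ k <= 2 ^ k * (k`! * ((2 * k) ^ k.-1 * B ^ k.-1 * Q ^ k.-1) * ((n %/ B).+1 * E)).
  apply: leq_trans (leq_mul (leqnn _) (expn_mono _ _ k hX)) _.
  by rewrite expnMn mulnCA leq_mul2l H orbT.
have eB : B ^ k = B * B ^ k.-1 by rewrite -expnS prednK.
have Bp : 0 < B ^ k.-1 by rewrite expn_gt0 B0.
have H2 : B * #|S| ^ k <= 2 ^ k * (k`! * ((2 * k) ^ k.-1 * Q ^ k.-1) * ((n %/ B).+1 * E)).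
  rewrite -(leq_pmul2l Bp) mulnA (mulnC (B ^ k.-1) B) -eB.
  apply: leq_trans H1 _; apply: eq_leq.
  set Y := B ^ k.-1; set Z := (2 * k) ^ k.-1; set W := Q ^ k.-1; lia.
have eQ : Q ^ k.-1 = n ^ (k.-1 * k.-1) by rewrite /Q -expnM.
rewrite -eQ.
apply: leq_trans (leq_mul hn2 (leqnn _)) _.
rewrite -mulnA.
have := leq_mul (leqnn (80 * kk)) H2.
set Y := 2 ^ k; set Z := (2 * k) ^ k.-1; set W := Q ^ k.-1; set F := k`!; set T := (n %/ B).+1.
move=> h; apply: leq_trans h _.
have : 80 * kk * (Y * (F * (Z * W) * (T * E))) <= 80 * kk * (Y * (F * (Z * W) * (80 * kk * E))).
  rewrite leq_mul2l; apply/orP; right; rewrite leq_mul2l; apply/orP; right.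
  rewrite leq_mul2l; apply/orP; right; exact: leq_mul.
move=> h; apply: leq_trans h _; apply: eq_leq; rewrite /kk; apply: rearr.
Qed.
Lemma const_bound k : 3 <= k ->
  (80 * 80) * (k * k * (k * k)) * 2 ^ k * (2 * k) ^ k.-1 <= 10 * k * 2 ^ (3 * k * k) * 2 ^ (3 * k).
Proof.
move=> k3.
have kp : k < 2 ^ k by apply: ltn_expl.
have h3 : k * k * k <= 2 ^ (3 * k).
  rewrite (mulnC 3 k) expnM; apply: leq_trans (expn_mono _ _ 3 (ltnW kp)); by rewrite !expnS expn0 muln1 mulnA.
have h2 : (2 * k) ^ k.-1 <= 2 ^ (k.+1 * k.-1).
  rewrite expnM; apply: expn_mono; rewrite expnS leq_mul2l; lia.
have e1 : (80 * 80) * (k * k * (k * k)) * 2 ^ k * (2 * k) ^ k.-1 =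
   (80 * 80) * k * (k * k * k) * (2 ^ k * (2 * k) ^ k.-1).
  by set P := 2 ^ k; set Q := (2 * k) ^ k.-1; rewrite -?multE -?plusE; ring.
rewrite e1.
have h4 : (80 * 80) * k * (k * k * k) * (2 ^ k * (2 * k) ^ k.-1) <=
          10 * k * 2 ^ (3 * k) * 2 ^ (10 + (k + k.+1 * k.-1)).
  have eX : 2 ^ (10 + (k + k.+1 * k.-1)) = 1024 * (2 ^ k * 2 ^ (k.+1 * k.-1)) by rewrite !expnD.
  rewrite eX.
  have : (80 * 80) * k * (k * k * k) * (2 ^ k * (2 * k) ^ k.-1) <=
         (80 * 80) * k * 2 ^ (3 * k) * (2 ^ k * 2 ^ (k.+1 * k.-1)).
    apply: leq_mul; first by apply: leq_mul.
    by apply: leq_mul.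
  move=> h; apply: leq_trans h _.
  set P := 2 ^ k; set Q := 2 ^ (k.+1 * k.-1); set R := 2 ^ (3 * k).
  have -> : 10 * k * R * (1024 * (P * Q)) = (10 * 1024) * (k * R * (P * Q)) by rewrite -?multE -?plusE; ring.
  have -> : 80 * 80 * k * R * (P * Q) = (80 * 80) * (k * R * (P * Q)) by rewrite -?multE -?plusE; ring.
  by apply: leq_mul.
apply: leq_trans h4 _.
set R := 2 ^ (3 * k).
have : 2 ^ (10 + (k + k.+1 * k.-1)) <= 2 ^ (3 * k * k) by apply: leq_pexp2l => //; nia.
set U := 2 ^ (10 + _); set V := 2 ^ (3 * k * k).
move=> h.
have -> : 10 * k * V * R = (10 * k * R) * V by rewrite -?multE -?plusE; ring.
exact: leq_mul.
Qed.

Lemma INR_muln (a b : nat) : INR (a * b)%N = (INR a * INR b)%R.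
Proof. by rewrite -multE mult_INR. Qed.

Lemma INR_expn (a b : nat) : INR (expn a b) = (INR a ^ b)%R.
Proof.
elim: b => [|b IH]; first by rewrite expn0.
by rewrite expnS INR_muln IH /=.
Qed.

Lemma INR_le_pow2 (n : nat) : (INR n <= 2 ^ n)%R.
Proof.
elim: n => [|n IH]; first by simpl; lra.
rewrite S_INR /=.
have : (1 <= 2 ^ n)%R by apply: pow_R1_Rle; lra.
lra.
Qed.

Lemma log2_le (n : nat) : (log2 (INR n) <= INR n)%R.
Proof.
have l2 : (0 < ln 2)%R by rewrite -ln_1; apply: ln_increasing; lra.
case: n => [|n].
  have l0 : ln 0 = 0%R by unfold ln; case: (Rlt_dec 0 0) => [a|_] //; exfalso; lra.
  rewrite /log2 /= l0 /Rdiv Rmult_0_l; lra.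
have np : (0 < INR n.+1)%R by apply: lt_0_INR; apply/ltP.
have h : (ln (INR n.+1) <= INR n.+1 * ln 2)%R.
  rewrite -ln_pow; last lra.
  have := INR_le_pow2 n.+1; case/Rle_lt_or_eq_dec => h.
    by apply: Rlt_le; apply: ln_increasing.
  by rewrite h; lra.
rewrite /log2; apply: (Rmult_le_reg_r (ln 2)) => //.
rewrite /Rdiv Rmult_assoc Rinv_l; lra.
Qed.

Lemma real_facts n k : (3 <= k)%N -> (INR k < 0.01 * sqrt (log2 (INR n)))%R ->
  (1 <= log2 (INR n))%R /\ (80 * (k * k) < n)%N.
Proof.
move=> k3 hk.
have hk3 : (3 <= INR k)%R by have := le_INR 3 k (elimT leP k3); rewrite /= ; lra.
set L := log2 (INR n) in hk *.
have Lp : (0 < L)%R.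
  case: (Rle_lt_dec L 0) => // h; move: hk; rewrite sqrt_neg_0 //; lra.
have ss := sqrt_sqrt L (Rlt_le _ _ Lp).
have s0 := sqrt_pos L.
have kk : (INR k * INR k < 0.0001 * L)%R by nra.
split; first by nra.
apply/ltP; apply: INR_lt; rewrite !INR_muln.
have := log2_le n; rewrite -/L; simpl INR; lra.
Qed.

Theorem lemma4p4 :
  exists N : nat, forall n : nat, (N <= n)%N ->
  forall (k : nat) (gamma : R),
    (3 <= k)%N ->
    (INR k < 0.01 * sqrt (log2 (INR n)))%R ->
    (0.1 < gamma)%R -> (gamma <= 1)%R ->
  forall S : {set vert n k},
    INR #|S| = (gamma * INR n ^ k)%R ->
    (gamma ^ (k + 1) * INR n ^ (2 * k)
       / (INR (factorial k) * 2 ^ (3 * k * k) * 10 * 2 ^ (3 * k) * INR k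
          * log2 (INR n))
     <= INR #|spanned_edges k S|)%R.
Proof.
exists 0%N => n _ k gamma k3 hk hg0 hg1 S hS.
have [L1 hn] := real_facts n k k3 hk.
have n0 : (0 < n)%N by apply: leq_ltn_trans hn.
have nR : (0 < INR n)%R by apply: lt_0_INR; apply/ltP.
have hS10 : (n ^ k <= 10 * #|S|)%N.
  apply/leP; apply: INR_le; rewrite INR_muln INR_expn hS.
  have : (0 <= INR n ^ k)%R by apply: pow_le; lra.
  simpl INR; nra.
set E := #|spanned_edges k S|.
have [C [FN CB]] : exists C, (n * #|S| ^ k <= C * k`! * n ^ (k.-1 * k.-1) * E)%N /\
    (C <= 10 * k * 2 ^ (3 * k * k) * 2 ^ (3 * k))%N.
  exists (80 * 80 * (k * k * (k * k)) * 2 ^ k * (2 * k) ^ k.-1)%N; split.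
    exact: final_nat n k S k3 hn hS10.
  exact: const_bound k k3.
have FNR := le_INR _ _ (elimT leP FN).
rewrite !INR_muln !INR_expn hS in FNR.
have CBR := le_INR _ _ (elimT leP CB).
rewrite !INR_muln !INR_expn in CBR.
have e2 : INR 2 = 2%R by simpl; lra.
have e10 : INR 10 = 10%R by simpl; lra.
rewrite e2 e10 in CBR.
have ee : ((k * k).+1 = k.-1 * k.-1 + 2 * k)%N by lia.
have eP : (INR n * (gamma * INR n ^ k) ^ k =
          gamma ^ k * INR n ^ (2 * k) * INR n ^ (k.-1 * k.-1))%R.
  rewrite Rpow_mult_distr -pow_mult.
  have -> : (INR n * (gamma ^ k * INR n ^ (k * k)) = gamma ^ k * INR n ^ (k * k).+1)%R.
    by simpl; ring.
  by rewrite ee pow_add; ring.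
rewrite eP in FNR.
set P := (INR n ^ (k.-1 * k.-1))%R in FNR.
have Pp : (0 < P)%R by apply: pow_lt.
have H1 : (gamma ^ k * INR n ^ (2 * k) <= INR C * INR (factorial k) * INR E)%R.
  apply: (Rmult_le_reg_r P) => //; lra.
set G := (gamma ^ k)%R in H1 *.
set N2 := (INR n ^ (2 * k))%R in H1 *.
set F := INR (factorial k) in H1 *.
set A := (2 ^ (3 * k * k))%R in CBR *.
set Bq := (2 ^ (3 * k))%R in CBR *.
set L := log2 (INR n) in L1 *.
have G0 : (0 <= G)%R by apply: pow_le; lra.
have N20 : (0 <= N2)%R by apply: pow_le; lra.
have F0 : (0 < F)%R by apply: lt_0_INR; apply/ltP; apply: fact_gt0.
have A0 : (0 < A)%R by apply: pow_lt; lra.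
have B0 : (0 < Bq)%R by apply: pow_lt; lra.
have K3 : (3 <= INR k)%R by have := le_INR 3 k (elimT leP k3); simpl; lra.
have E0 : (0 <= INR E)%R by apply: pos_INR.
have eg : (gamma ^ (k + 1) = G * gamma)%R by rewrite pow_add /= Rmult_1_r.
rewrite eg.
have D0 : (0 < F * A * 10 * Bq * INR k * L)%R.
  have h1 : (0 < F * A)%R by apply: Rmult_lt_0_compat.
  have h2 : (0 < F * A * 10)%R by apply: Rmult_lt_0_compat; lra.
  have h3 : (0 < F * A * 10 * Bq)%R by apply: Rmult_lt_0_compat; lra.
  have h4 : (0 < F * A * 10 * Bq * INR k)%R by apply: Rmult_lt_0_compat; lra.
  by apply: Rmult_lt_0_compat; lra.
apply: (Rmult_le_reg_r _ _ _ D0).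
rewrite /Rdiv Rmult_assoc Rinv_l; last lra.
rewrite Rmult_1_r.
have s1 : (G * gamma * N2 <= G * N2)%R.
  have : (0 <= G * N2)%R by apply: Rmult_le_pos.
  nra.
have s2 : (INR C * F * INR E <= 10 * INR k * A * Bq * F * INR E)%R.
  apply: Rmult_le_compat_r => //; apply: Rmult_le_compat_r; lra.
have s3 : (10 * INR k * A * Bq * F * INR E <= 10 * INR k * A * Bq * F * INR E * L)%R.
  have : (0 <= 10 * INR k * A * Bq * F * INR E)%R.
    repeat apply: Rmult_le_pos; lra.
  nra.
have e3 : (10 * INR k * A * Bq * F * INR E * L = INR E * (F * A * 10 * Bq * INR k * L))%R by ring.
lra.
Qed.
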